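(* Let $\mathbb G$ be a cyclic group (i.e., $\mathbb Z_n$ for some $n\ge1$, or $\mathbb Z$) with generator $1$, let $(\mathbf A,\mathbf A')$ be a promise template and $k\ge1$. The $\mathbb G$-affine $k$-consistency relaxation solves $\mathrm{PCSP}(\mathbf A,\mathbf A')$ if and only if the $k$-consistency reduction $\kappa_k^{\mathbf A,\mathbf G}$ is a reduction from $\mathrm{PCSP}(\mathbf A,\mathbf A')$ to $\mathrm{CSP}(\mathbf G)$.
   Context: Structures. A (multisorted relational) signature consists of types and relation symbols, each symbol $R$ having an arity $\mathrm{ar}_R$, a tuple of types. A structure $\mathbf A$ consists of a set $A_t$ per type and relations $R^{\mathbf A}\subseteq A_{\mathrm{ar}_R(1)}\times\dots\times A_{\mathrm{ar}_R(k)}$. A homomorphism is a type-preserving family of maps preserving all relations; write $\mathbf A\to\mathbf B$. For a finite set $F$, $\mathbf B^F$ has domains $B_t^F$ and $(b_1,\dots,b_m)\in R^{\mathbf B^F}$ iff $(b_1(i),\dots,b_m(i))\in R^{\mathbf B}$ for all $i\in F$. Promise CSP. A promise template is a pair $(\mathbf A,\mathbf A')$ of structures of the same signature, $\mathbf A$ finite, $\mathbf A\to\mathbf A'$. $\mathrm{PCSP}(\mathbf A,\mathbf A')$: given finite $\mathbf X$, answer yes if $\mathbf X\to\mathbf A$, no if $\mathbf X\not\to\mathbf A'$; $\mathrm{CSP}(\mathbf B)=\mathrm{PCSP}(\mathbf B,\mathbf B)$. A map $\psi$ is a reduction from $\mathrm{PCSP}(\mathbf A,\mathbf A')$ to $\mathrm{PCSP}(\mathbf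 B,\mathbf B')$ if $\mathbf X\to\mathbf A\Rightarrow\psi(\mathbf X)\to\mathbf B$ and $\psi(\mathbf X)\to\mathbf B'\Rightarrow\mathbf X\to\mathbf A'$. Group template. For an Abelian group $\mathbb G$, $\mathbf G$ is the single-sorted structure with domain $G$, the ternary relation $\{(x_1,x_2,y)\mid x_1+x_2=y\}$, and a unary relation $\{b\}$ for each $b\in G$. $k$-consistency. For $\mathbf X$ and a set $K$ of at most $k$ elements of $\mathbf X$, a partial homomorphism $K\to\mathbf A$ is a type-preserving $f\colon K\to A$ with $(f(v_1),\dots,f(v_m))\in R^{\mathbf A}$ for every $(v_1,\dots,v_m)\in R^{\mathbf X}$ with all $v_i\in K$. Enforcing $k$-consistency: (1) let $\mathcal F_K$ be the set of partial homomorphisms $K\to\mathbf A$ for each $|K|\le k$; (2) for each $L\subset K$ remove from $\mathcal F_L$ elements not extending to some $g\in\mathcal F_K$ and from $\mathcal F_K$ every $g$ with $g|_L\notin\mathcal F_L$; (3) repeat (2) until stable. The $k$-consistency reduction $\kappa_k^{\mathbf A,\mathbf B}(\mathbf X)$ continues: (4) for each $K$ take a copy of $\mathbf B^{\mathcal F_K}$ with elements $(K;b)$; (5) for $L\subseteq K$ identify $(K;b\circ\rho_{K,L})$ with $(L;b)$ where $\rho_{K,L}(g)=g|_L$; output the quotient by the generated equivalence relation, relations being images. $\mathbb G$-affine $k$-consistency relaxation. Given $\mathbf X$, compute the final sets $\mathcal F_K$ from steps (1)–(3), and form the system of equations over $\mathbb G$ with variables $x_{K,f}\in G$ ($|K|\le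 k$, $f\in\mathcal F_K$): $\sum_{f\in\mathcal F_K}x_{K,f}=1$ for each $K$, and $\sum_{f\in\mathcal F_K,f|_L=g}x_{K,f}=x_{L,g}$ for each $L\subset K$, $g\in\mathcal F_L$. The relaxation accepts iff the system has a solution; it solves $\mathrm{PCSP}(\mathbf A,\mathbf A')$ if it rejects every $\mathbf X$ with $\mathbf X\not\to\mathbf A'$ (it always accepts when $\mathbf X\to\mathbf A$). *)

(* Defs.v *)
From HB Require Import structures.
From mathcomp Require Import all_boot all_algebra.
From mathcomp Require Import boolp.
From Stdlib Require Import Relation_Operators.

Set Implicit Arguments.
Unset Strict Implicit.
Unset Printing Implicit Defensive.
Import GRing.Theory.
Local Open Scope ring_scope.

(* A structure over carrier T: every element has a type (sort); the    *)
(* domain A_t is {a | sty a = t}.  Relations are sets of tuples (seqs) *)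
(* which must be well-typed w.r.t. the arity.                          *)
Record signature := Signature {
  sort : Type;
  sym : Type;
  arity : sym -> seq sort }.

Record structure (S : signature) (T : Type) := Structure {
  sty : T -> sort S;
  srel : sym S -> seq T -> Prop;
  srel_wt : forall R s, srel R s -> map sty s = arity R }.
Arguments sty {S T}.
Arguments srel {S T}.

Definition is_hom (S : signature) (T U : Type) (A : structure S T)
    (B : structure S U) (f : T -> U) : Prop :=
  (forall x, sty B (f x) = sty A x) /\
  (forall R s, srel A R s -> srel B R (map f s)).

Definition homExists (S : signature) (T U : Type) (A : structure S T)
    (B : structure S U) : Prop := exists f, is_hom A B f.

Definition is_reduction (S S' : signature) (TA TA' TB TB' : Type)
    (A : structure S TA) (A' : structure S TA')
    (B : structure S' TB) (B' : structure S' TB')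
    (psi : forall X : finType, structure S X -> {T : Type & structure S' T}) : Prop :=
  forall (X : finType) (XX : structure S X),
    (homExists XX A -> homExists (projT2 (psi X XX)) B) /\
    (homExists (projT2 (psi X XX)) B' -> homExists XX A').

(* A partial map K -> A is a finite function X -> option TA whose      *)
(* support is exactly K.                                               *)
Notation pmap X TA := {ffun X -> option TA}.

Definition restr (X TA : finType) (L : {set X}) (f : pmap X TA) : pmap X TA :=
  [ffun x => if x \in L then f x else None].

Definition partial_hom (S : signature) (X TA : finType) (XX : structure S X)
    (A : structure S TA) (K : {set X}) (f : pmap X TA) : Prop :=
  (forall x, (x \in K) = (f x != None)) /\
  (forall x a, f x = Some a -> sty A a = sty XX x) /\
  (forall R vs, srel XX R vs -> all (fun v => v \in K) vs ->
      exists2 as_, map f vs = map Some as_ & srel A R as_).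

Definition kc_init (S : signature) (X TA : finType) (XX : structure S X)
    (A : structure S TA) (k : nat) : {set X} -> {set pmap X TA} :=
  fun K => [set f | (#|K| <= k)%N && `[< partial_hom XX A K f >]].

(* step (2), applied simultaneously to all pairs L \subset K, |K| <= k *)
Definition kc_step (X TA : finType) (k : nat)
    (F : {set X} -> {set pmap X TA}) : {set X} -> {set pmap X TA} :=
  fun L => [set f in F L |
     [forall K : {set X}, ((L \subset K) && (#|K| <= k)%N) ==>
                            [exists g, (g \in F K) && (restr L g == f)]]
     && [forall L' : {set X}, (L' \subset L) ==> (restr L' f \in F L')]].

(* step (3): repeat until stable.  Every non-stable step removes at    *)
(* least one element, so #|{set X}| * #|pmap X TA| + 1 iterations      *)
(* reach the stable family.                                            *)
Definition kc_family (S : signature) (X TA : finType) (XX : structure S X)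
    (A : structure S TA) (k : nat) : {set X} -> {set pmap X TA} :=
  iter (#|{: {set X}}| * #|{: pmap X TA}|).+1 (@kc_step X TA k) (kc_init XX A k).

Definition affine_accepts (S : signature) (X TA : finType) (XX : structure S X)
    (A : structure S TA) (k : nat) (G : zmodType) (one : G) : Prop :=
  let F := kc_family XX A k in
  exists x : {set X} -> pmap X TA -> G,
    (forall K : {set X}, (#|K| <= k)%N -> \sum_(f in F K) x K f = one) /\
    (forall K L : {set X}, (#|K| <= k)%N -> L \subset K ->
       forall h, h \in F L ->
         \sum_(f in F K | restr L f == h) x K f = x L h).

Definition affine_solves (S : signature) (TA0 : finType) (TA' : Type)
    (A : structure S TA0) (A' : structure S TA') (k : nat)
    (G : zmodType) (one : G) : Prop :=
  forall (X : finType) (XX : structure S X),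
    ~ homExists XX A' -> ~ affine_accepts XX A k one.

(* The k-consistency reduction kappa_k^{A,B}(X), for a single-sorted   *)
(* target B (all elements of sort s0).  Elements of the copy of        *)
(* B^{F_K} are represented by pairs (K, b) with b : pmap -> TB (only   *)
(* the values on F_K matter; this is handled by the identification     *)
(* with L = K).  The carrier is the set of equivalence classes of the  *)
(* equivalence relation generated by (K; b o rho_{K,L}) ~ (L; b).      *)
Definition Kidx (X : finType) (k : nat) := {K : {set X} | (#|K| <= k)%N}.

Definition kdom (X TA : finType) (k : nat) (TB : Type) :=
  (Kidx X k * (pmap X TA -> TB))%type.

Definition kbase (S : signature) (X TA : finType) (XX : structure S X)
    (A : structure S TA) (k : nat) (TB : Type) (d e : @kdom X TA k TB) : Prop :=
  (proj1_sig e.1 \subset proj1_sig d.1) /\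
  (forall f, f \in kc_family XX A k (proj1_sig d.1) ->
      d.2 f = e.2 (restr (proj1_sig e.1) f)).

Definition kequiv (S : signature) (X TA : finType) (XX : structure S X)
    (A : structure S TA) (k : nat) (TB : Type) :=
  clos_refl_sym_trans (@kdom X TA k TB) (@kbase S X TA XX A k TB).

Definition kcarrier (S : signature) (X TA : finType) (XX : structure S X)
    (A : structure S TA) (k : nat) (TB : Type) :=
  {P : @kdom X TA k TB -> Prop | exists d, P = @kequiv S X TA XX A k TB d}.

Definition kproj (S : signature) (X TA : finType) (XX : structure S X)
    (A : structure S TA) (k : nat) (TB : Type) (d : @kdom X TA k TB) :
    @kcarrier S X TA XX A k TB :=
  exist _ (@kequiv S X TA XX A k TB d) (ex_intro _ d erefl).

Definition krel (S : signature) (X TA : finType) (XX : structure S X)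
    (A : structure S TA) (k : nat) (S' : signature) (s0 : sort S')
    (TB : Type) (B : structure S' TB)
    (R : sym S') (qs : seq (@kcarrier S X TA XX A k TB)) : Prop :=
  map (fun _ => s0) qs = arity R /\
  exists (K : Kidx X k) (bs : seq (pmap X TA -> TB)),
    qs = map (fun b => @kproj S X TA XX A k TB (K, b)) bs /\
    (forall f, f \in kc_family XX A k (proj1_sig K) ->
       srel B R (map (fun b => b f) bs)).

Definition kappa (S : signature) (X TA : finType) (XX : structure S X)
    (A : structure S TA) (k : nat) (S' : signature) (s0 : sort S')
    (TB : Type) (B : structure S' TB) : structure S' (@kcarrier S X TA XX A k TB) :=
  @Structure S' _ (fun _ => s0) (@krel S X TA XX A k S' s0 TB B)
    (fun R qs H => proj1 H).

Definition sigG (G : Type) : signature :=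
  @Signature unit (option G)
    (fun o => if o is None then [:: tt; tt; tt] else [:: tt]).

Definition Grel (G : zmodType) (R : option G) (s : seq G) : Prop :=
  match R with
  | None => exists x1 x2 y, s = [:: x1; x2; y] /\ x1 + x2 = y
  | Some b => s = [:: b]
  end.

Lemma Grel_wt (G : zmodType) (R : option G) (s : seq G) :
  Grel R s -> map (fun _ => tt) s = @arity (sigG G) R.
Proof.
case: R => [b|] /=; first by move=> ->.
by move=> [x1 [x2 [y [-> _]]]].
Qed.

Definition Gtemplate (G : zmodType) : structure (sigG G) G :=
  @Structure (sigG G) G (fun _ => tt) (@Grel G) (@Grel_wt G).

Definition kappaG (S : signature) (TA : finType) (A : structure S TA) (k : nat)
    (G : zmodType) :
    forall X : finType, structure S X -> {T : Type & structure (sigG G) T} :=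
  fun X XX => existT _ _ (@kappa S X TA XX A k (sigG G) tt G (Gtemplate G)).

(* Main.v *)
Require Import Defs.
From HB Require Import structures.
From mathcomp Require Import all_boot all_algebra.
From mathcomp Require Import boolp.
From Stdlib Require Import Relation_Operators Classical_Prop.
Set Implicit Arguments.
Unset Strict Implicit.
Unset Printing Implicit Defensive.
Import GRing.Theory.
Lemma step_sub (X TA : finType) (k : nat) (F : {set X} -> {set {ffun X -> option TA}}) L :
  kc_step k F L \subset F L.
Proof. by apply/subsetP => f; rewrite inE => /andP[]. Qed.

Definition msr (X TA : finType) (F : {set X} -> {set {ffun X -> option TA}}) :=
  (\sum_(L : {set X}) #|F L|)%N.

Lemma step_dec (X TA : finType) (k : nat) (F : {set X} -> {set {ffun X -> option TA}}) :
  ~~ [forall L, kc_step k F L == F L] -> (msr (kc_step k F) < msr F)%N.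
Proof.
move=> /forallPn [L HL].
rewrite /msr (bigD1 L) //= [X in (_ < X)%N](bigD1 L) //=.
rewrite -addSn leq_add //.
  rewrite ltn_neqAle; apply/andP; split; last exact: subset_leq_card (step_sub _ _ _).
  apply: contra HL => /eqP Hc; rewrite eqEcard step_sub /= Hc leqnn //.
by apply: leq_sum => i _; apply: subset_leq_card (step_sub _ _ _).
Qed.

Lemma msr_bound (X TA : finType) (F : {set X} -> {set {ffun X -> option TA}}) :
  (msr F <= #|{: {set X}}| * #|{: {ffun X -> option TA}}|)%N.
Proof.
rewrite /msr -sum_nat_const; apply: leq_sum => L _; exact: max_card.
Qed.

Lemma kc_stable (S : signature) (X TA : finType) (XX : structure S X)
    (A : structure S TA) (k : nat) :
  kc_step k (kc_family XX A k) = kc_family XX A k.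
Proof.
set M := (#|{: {set X}}| * #|{: {ffun X -> option TA}}|)%N.
set F0 := kc_init XX A k.
have H : forall n, [forall L, kc_step k (iter n (kc_step k) F0) L
                        == iter n (kc_step k) F0 L]
          \/ (msr (iter n (kc_step k) F0) + n <= msr F0)%N.
  elim=> [|n [IH|IH]]; first by right; rewrite addn0.
    left; rewrite iterS.
    have -> : kc_step k (iter n (kc_step k) F0) = iter n (kc_step k) F0.
      by apply: funext => L; apply/eqP; move/forallP: IH.
    exact: IH.
  case E: [forall L, kc_step k (iter n.+1 (kc_step k) F0) L
                        == iter n.+1 (kc_step k) F0 L]; first by left.
  right; apply: leq_trans IH; rewrite addnS -addSn leq_add2r iterS.
  apply: step_dec; apply: contraFN E => /forallP Hs.
  have Hf : kc_step k (iter n (kc_step k) F0) = iter n (kc_step k) F0.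
    by apply: funext => L'; apply/eqP; apply: Hs.
  by rewrite iterS Hf; apply/forallP.
case: (H M.+1) => [Hs|Hb].
  by apply: funext => L; apply/eqP; move/forallP: Hs.
have := leq_trans Hb (msr_bound F0).
by rewrite addnS ltnNge leq_addl.
Qed.

Lemma kc_restr (S : signature) (X TA : finType) (XX : structure S X)
    (A : structure S TA) (k : nat) (K L : {set X}) (f : {ffun X -> option TA}) :
  L \subset K -> f \in kc_family XX A k K -> restr L f \in kc_family XX A k L.
Proof.
move=> LK; rewrite -{1}kc_stable inE => /andP[_ /andP[_ /forallP H]].
by move: (H L); rewrite LK.
Qed.
Local Open Scope ring_scope.

Definition hres (X TA : finType) (h : X -> TA) (K : {set X}) : {ffun X -> option TA} :=
  [ffun x => if x \in K then Some (h x) else None].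

Lemma restr_hres (X TA : finType) (h : X -> TA) (K L : {set X}) :
  L \subset K -> restr L (hres h K) = hres h L.
Proof.
move=> LK; apply/ffunP => x; rewrite !ffunE.
by case: ifP => // xL; rewrite (subsetP LK x xL).
Qed.

Lemma hres_init (S : signature) (X TA : finType) (XX : structure S X)
    (A : structure S TA) (k : nat) (h : X -> TA) (K : {set X}) :
  is_hom XX A h -> (#|K| <= k)%N -> hres h K \in kc_init XX A k K.
Proof.
move=> [Hty Hrel] Hk; rewrite inE Hk /=; apply/asboolP; split; [|split].
- by move=> x; rewrite ffunE; case: (x \in K).
- by move=> x a; rewrite ffunE; case: (x \in K) => // -[<-].
- move=> R vs HR Hall; exists (map h vs); last exact: Hrel.
  elim: vs Hall {HR} => //= v vs IH /andP[vK Hall].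
  by rewrite ffunE vK IH.
Qed.

Lemma hres_fam (S : signature) (X TA : finType) (XX : structure S X)
    (A : structure S TA) (k : nat) (h : X -> TA) :
  is_hom XX A h -> forall n (K : {set X}), (#|K| <= k)%N ->
  hres h K \in iter n (kc_step k) (kc_init XX A k) K.
Proof.
move=> Hh; elim=> [|n IH] K Hk; first exact: hres_init.
rewrite iterS inE IH //=; apply/andP; split; apply/forallP => K'; apply/implyP.
  move=> /andP[LK' HK']; apply/existsP; exists (hres h K').
  by rewrite IH //= restr_hres.
move=> LK; rewrite restr_hres //; apply: IH.
exact: leq_trans (subset_leq_card LK) Hk.
Qed.

Lemma hom_accepts (S : signature) (X TA : finType) (XX : structure S X)
    (A : structure S TA) (k : nat) (G : zmodType) (one : G) :
  homExists XX A -> affine_accepts XX A k one.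
Proof.
move=> [h Hh].
have Hf : forall K : {set X}, (#|K| <= k)%N -> hres h K \in kc_family XX A k K.
  by move=> K Hk; apply: hres_fam.
exists (fun K f => if f == hres h K then one else 0); split.
  move=> K Hk; rewrite (bigD1 (hres h K)) ?Hf //= eqxx big1 ?addr0 //.
  by move=> f /andP[_ /negbTE ->].
move=> K L Hk LK h' Hh'.
have HL := leq_trans (subset_leq_card LK) Hk.
case: (eqVneq h' (hres h L)) => [->|Hne].
  rewrite (bigD1 (hres h K)) /=; last by rewrite Hf //= restr_hres.
  rewrite eqxx big1 ?addr0 //.
  by move=> f /andP[_ /negbTE ->].
rewrite big1 // => f /andP[_ Hr].
case: (eqVneq f (hres h K)) => // Ef; exfalso.
by move: Hr; rewrite Ef restr_hres // => /eqP E; rewrite E eqxx in Hne.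
Qed.

Lemma kequiv_proj (S : signature) (X TA : finType) (XX : structure S X)
    (A : structure S TA) (k : nat) (TB : Type) (d e : kdom X TA k TB) :
  kequiv XX A d e -> kproj XX A d = kproj XX A e.
Proof.
move=> H; apply: eq_exist; apply: funext => z; apply: propext; split => H'.
  exact: rst_trans (rst_sym _ _ _ _ H) H'.
exact: rst_trans H H'.
Qed.



Definition Phi (S : signature) (X TA : finType) (XX : structure S X)
    (A : structure S TA) (k : nat) (G : zmodType)
    (phi : kcarrier XX A k G -> G) (K : Kidx X k) (b : {ffun X -> option TA} -> G) :=
  phi (kproj XX A (K, b)).

Definition ishomG (S : signature) (X TA : finType) (XX : structure S X)
    (A : structure S TA) (k : nat) (G : zmodType) (phi : kcarrier XX A k G -> G) :=
  is_hom (@kappa _ _ _ XX A k (sigG G) tt G (Gtemplate G)) (Gtemplate G) phi.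

Lemma Phi_add (S : signature) (X TA : finType) (XX : structure S X)
    (A : structure S TA) (k : nat) (G : zmodType) (phi : kcarrier XX A k G -> G)
    K b1 b2 :
  ishomG phi -> Phi phi K b1 + Phi phi K b2 = Phi phi K (fun g => b1 g + b2 g).
Proof.
move=> [_ Hrel].
have := Hrel None [:: kproj XX A (K, b1); kproj XX A (K, b2);
                       kproj XX A (K, fun g => b1 g + b2 g)].
case.
  split => //; exists K, [:: b1; b2; fun g => b1 g + b2 g]; split => // f _.
  by exists (b1 f), (b2 f), (b1 f + b2 f).
by rewrite /Phi; move=> y1 [y2 [y3 [[-> -> ->]]]].
Qed.

Lemma Phi_const (S : signature) (X TA : finType) (XX : structure S X)
    (A : structure S TA) (k : nat) (G : zmodType) (phi : kcarrier XX A k G -> G)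
    K (c : G) :
  ishomG phi -> Phi phi K (fun _ => c) = c.
Proof.
move=> [_ Hrel].
have : Grel (Some c) [:: Phi phi K (fun _ => c)].
  apply: (Hrel (Some c) [:: kproj XX A (K, fun _ => c)]).
  by split => //; exists K, [:: fun _ => c]; split.
by case.
Qed.

Lemma Phi_base (S : signature) (X TA : finType) (XX : structure S X)
    (A : structure S TA) (k : nat) (G : zmodType) (phi : kcarrier XX A k G -> G)
    (K L : Kidx X k) b b' :
  proj1_sig L \subset proj1_sig K ->
  (forall f, f \in kc_family XX A k (proj1_sig K) -> b f = b' (restr (proj1_sig L) f)) ->
  Phi phi K b = Phi phi L b'.
Proof.
move=> LK Hb; rewrite /Phi (@kequiv_proj _ _ _ _ _ _ _ _ (L, b')) //.
by apply: rst_step; split.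
Qed.

Lemma Phi_sum (S : signature) (X TA : finType) (XX : structure S X)
    (A : structure S TA) (k : nat) (G : zmodType) (phi : kcarrier XX A k G -> G)
    K (I : Type) (r : seq I) (P : pred I) (B : I -> {ffun X -> option TA} -> G) :
  ishomG phi ->
  Phi phi K (fun g => \sum_(i <- r | P i) B i g) = \sum_(i <- r | P i) Phi phi K (B i).
Proof.
move=> Hh; elim: r => [|a r IH].
  rewrite big_nil -[RHS](Phi_const K 0 Hh); congr Phi.
  by apply: funext => g; rewrite big_nil.
rewrite big_cons; case Pa: (P a).
  rewrite -IH Phi_add //; congr Phi.
  by apply: funext => g; rewrite big_cons Pa.
rewrite -IH; congr Phi.
by apply: funext => g; rewrite big_cons Pa.
Qed.

Definition delta (TA X : finType) (G : zmodType) (one : G) (f : {ffun X -> option TA}) :=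
  fun g : {ffun X -> option TA} => if g == f then one else 0.

Definition xdef (S : signature) (X TA : finType) (XX : structure S X)
    (A : structure S TA) (k : nat) (G : zmodType) (one : G)
    (phi : kcarrier XX A k G -> G) (K : {set X}) (f : {ffun X -> option TA}) : G :=
  if @insub _ (fun K : {set X} => (#|K| <= k)%N) (Kidx X k) K is Some u
  then Phi phi u (delta one f) else 0.

Lemma xdefE (S : signature) (X TA : finType) (XX : structure S X)
    (A : structure S TA) (k : nat) (G : zmodType) (one : G)
    (phi : kcarrier XX A k G -> G) (K : {set X}) (Hk : (#|K| <= k)%N) f :
  xdef one phi K f = Phi phi (exist _ K Hk) (delta one f).
Proof. by rewrite /xdef insubT. Qed.

Lemma kappa_accepts (S : signature) (X TA : finType) (XX : structure S X)
    (A : structure S TA) (k : nat) (G : zmodType) (one : G) :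
  homExists (@kappa _ _ _ XX A k (sigG G) tt G (Gtemplate G)) (Gtemplate G) ->
  affine_accepts XX A k one.
Proof.
move=> [phi Hh]; exists (xdef one phi); split.
  move=> K Hk.
  under eq_bigr => f _ do rewrite (xdefE _ _ Hk).
  rewrite -Phi_sum //; rewrite -[RHS](Phi_const (exist _ K Hk) one Hh).
  apply: Phi_base => //= f Hf.
  rewrite (bigD1 f) //= /delta eqxx big1 ?addr0 // => i /andP[_ Hi].
  by rewrite eq_sym (negbTE Hi).
move=> K L Hk LK h _.
have HL := leq_trans (subset_leq_card LK) Hk.
under eq_bigr => f _ do rewrite (xdefE _ _ Hk).
rewrite (xdefE _ _ HL) -Phi_sum //.
apply: Phi_base => //= f Hf.
rewrite /delta; case: (eqVneq (restr L f) h) => [Hr|Hr].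
  rewrite (bigD1 f) /=; last by rewrite Hf Hr eqxx.
  rewrite eqxx big1 ?addr0 // => i /andP[_ Hi].
  by rewrite eq_sym (negbTE Hi).
rewrite big1 // => i /andP[_ /eqP Hi].
case: (eqVneq f i) => // Efi.
by rewrite Efi Hi eqxx in Hr.
Qed.

Definition mulz (G : zmodType) (one : G) (Hc : forall x : G, exists z : int, x = one *~ z)
  (u y : G) : G := y *~ projT1 (cid (Hc u)).

Lemma mul_wd (G : zmodType) (one : G) (Hc : forall x : G, exists z : int, x = one *~ z)
  (a b : int) (y : G) : one *~ a = one *~ b -> y *~ a = y *~ b.
Proof.
move=> E; have [c ->] := Hc y.
by rewrite -mulrzAC E mulrzAC.
Qed.

Lemma mulz_spec (G : zmodType) (one : G) (Hc : forall x : G, exists z : int, x = one *~ z)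
  (u y : G) (z : int) : u = one *~ z -> mulz Hc u y = y *~ z.
Proof.
move=> Eu; rewrite /mulz; case: (cid (Hc u)) => z' /= Ez'.
by apply: (mul_wd Hc); rewrite -Ez'.
Qed.

Lemma mulzDl (G : zmodType) (one : G) (Hc : forall x : G, exists z : int, x = one *~ z)
  (u v y : G) : mulz Hc (u + v) y = mulz Hc u y + mulz Hc v y.
Proof.
have [zu Eu] := Hc u; have [zv Ev] := Hc v.
rewrite (mulz_spec _ _ Eu) (mulz_spec _ _ Ev) (@mulz_spec _ _ _ _ _ (zu + zv)).
  by rewrite mulrzDr.
by rewrite mulrzDr -Eu -Ev.
Qed.

Lemma mulz_sumr (G : zmodType) (one : G) (Hc : forall x : G, exists z : int, x = one *~ z)
  (u : G) (I : Type) (r : seq I) (P : pred I) (F : I -> G) :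
  mulz Hc u (\sum_(i <- r | P i) F i) = \sum_(i <- r | P i) mulz Hc u (F i).
Proof. by rewrite /mulz mulrz_suml. Qed.

Lemma mulz_one (G : zmodType) (one : G) (Hc : forall x : G, exists z : int, x = one *~ z)
  (u : G) : mulz Hc u one = u.
Proof. by have [z Ez] := Hc u; rewrite (mulz_spec _ _ Ez). Qed.

Definition psi (S : signature) (X TA : finType) (XX : structure S X)
    (A : structure S TA) (k : nat) (G : zmodType) (one : G)
    (Hc : forall x : G, exists z : int, x = one *~ z)
    (x : {set X} -> {ffun X -> option TA} -> G) (d : kdom X TA k G) : G :=
  \sum_(f in kc_family XX A k (proj1_sig d.1)) mulz Hc (d.2 f) (x (proj1_sig d.1) f).

Lemma psi_base (S : signature) (X TA : finType) (XX : structure S X)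
    (A : structure S TA) (k : nat) (G : zmodType) (one : G)
    (Hc : forall x : G, exists z : int, x = one *~ z)
    (x : {set X} -> {ffun X -> option TA} -> G) :
  (forall K L : {set X}, (#|K| <= k)%N -> L \subset K ->
       forall h, h \in kc_family XX A k L ->
         \sum_(f in kc_family XX A k K | restr L f == h) x K f = x L h) ->
  forall d e : kdom X TA k G, kbase XX A d e -> psi XX A Hc x d = psi XX A Hc x e.
Proof.
move=> Hx [[K HK] b] [[L HL] b'] [/= LK Hb]; rewrite /psi /=.
rewrite (eq_bigr (fun f => mulz Hc (b' (restr L f)) (x K f))); last first.
  by move=> f Hf; rewrite Hb.
rewrite (partition_big (restr L) (mem (kc_family XX A k L))); last first.
  by move=> f Hf; apply: kc_restr Hf.
apply: eq_bigr => h Hh; rewrite -(Hx K L HK LK h Hh) mulz_sumr.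
by apply: eq_bigr => f /andP[_ /eqP ->].
Qed.

Lemma psi_equiv (S : signature) (X TA : finType) (XX : structure S X)
    (A : structure S TA) (k : nat) (G : zmodType) (one : G)
    (Hc : forall x : G, exists z : int, x = one *~ z)
    (x : {set X} -> {ffun X -> option TA} -> G) :
  (forall K L : {set X}, (#|K| <= k)%N -> L \subset K ->
       forall h, h \in kc_family XX A k L ->
         \sum_(f in kc_family XX A k K | restr L f == h) x K f = x L h) ->
  forall d e : kdom X TA k G, kequiv XX A d e -> psi XX A Hc x d = psi XX A Hc x e.
Proof.
move=> Hx d e; elim.
- by move=> ? ? H; apply: psi_base.
- by [].
- by move=> ? ? _ ->.
- by move=> ? ? ? _ -> _ ->.
Qed.

Definition phidef (S : signature) (X TA : finType) (XX : structure S X)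
    (A : structure S TA) (k : nat) (G : zmodType) (one : G)
    (Hc : forall x : G, exists z : int, x = one *~ z)
    (x : {set X} -> {ffun X -> option TA} -> G) (P : kcarrier XX A k G) : G :=
  psi XX A Hc x (projT1 (cid (proj2_sig P))).

Lemma phidef_proj (S : signature) (X TA : finType) (XX : structure S X)
    (A : structure S TA) (k : nat) (G : zmodType) (one : G)
    (Hc : forall x : G, exists z : int, x = one *~ z)
    (x : {set X} -> {ffun X -> option TA} -> G) :
  (forall K L : {set X}, (#|K| <= k)%N -> L \subset K ->
       forall h, h \in kc_family XX A k L ->
         \sum_(f in kc_family XX A k K | restr L f == h) x K f = x L h) ->
  forall d : kdom X TA k G, phidef Hc x (kproj XX A d) = psi XX A Hc x d.
Proof.
move=> Hx d; rewrite /phidef; case: (cid _) => d' /= E.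
apply/esym/psi_equiv => //.
by rewrite E; apply: rst_refl.
Qed.

Lemma accepts_kappa (S : signature) (X TA : finType) (XX : structure S X)
    (A : structure S TA) (k : nat) (G : zmodType) (one : G)
    (Hc : forall x : G, exists z : int, x = one *~ z) :
  affine_accepts XX A k one ->
  homExists (@kappa _ _ _ XX A k (sigG G) tt G (Gtemplate G)) (Gtemplate G).
Proof.
move=> [x [H1 H2]]; exists (phidef Hc x); split => // R s [Har [K [bs [Es Hf]]]]; subst s.
rewrite -map_comp.
have Em : map (phidef Hc x \o (fun b => kproj XX A (K, b))) bs
          = map (fun b => psi XX A Hc x (K, b)) bs.
  by apply: eq_map => b /=; rewrite phidef_proj.
rewrite Em; case: R Har Hf => [c|] /=.
  case: bs Em => [|b [|b' bs]] //= _ Har Hf.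
  congr (_ :: _); rewrite /psi /=.
  rewrite (eq_bigr (fun f => mulz Hc c (x (proj1_sig K) f))); last first.
    by move=> f Hf'; have := Hf f Hf'; case=> ->.
  by rewrite -mulz_sumr H1 ?mulz_one //; case: K {Hf Har}.
case: bs Em => [|b1 [|b2 [|b3 [|b4 bs]]]] //= _ Har Hf.
exists (psi XX A Hc x (K, b1)), (psi XX A Hc x (K, b2)), (psi XX A Hc x (K, b3)).
split => //; rewrite /psi /= -big_split /=.
apply: eq_bigr => f Hf'; rewrite -mulzDl.
have [y1 [y2 [y3 [[-> -> ->] <-]]]] := Hf f Hf'.
by [].
Qed.

Theorem mainTheorem11 (G : zmodType) (one : G)
    (Hcyclic : forall x : G, exists z : int, x = (one *~ z)%R)
    (S : signature) (TA : finType) (TA' : Type)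
    (A : structure S TA) (A' : structure S TA')
    (HAA' : homExists A A') (k : nat) (Hk : (1 <= k)%N) :
  @affine_solves S TA TA' A A' k G one <->
  @is_reduction S (sigG G) TA TA' G G A A' (Gtemplate G) (Gtemplate G)
    (@kappaG S TA A k G).
Proof.
split.
  move=> Hsol X XX; split.
    by move=> HA; apply: (accepts_kappa Hcyclic); apply: hom_accepts.
  move=> HK; apply: NNPP => HnA'.
  exact: (Hsol X XX HnA' (kappa_accepts one HK)).
move=> Hred X XX HnA' Hacc; apply: HnA'; apply: (proj2 (Hred X XX)).
exact: (accepts_kappa Hcyclic Hacc).
Qed.
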